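(* Let $(\mathcal{C},\wedge,S)$ be an $E_n$-monoidal semiadditive 1-category with cofibers over which $\wedge$ distributes, and let $m\in\mathbb{N}$. Then the cofiber $S/m$ of $m:S\to S$ is a closed idempotent. Moreover $\mathcal{C}(C\wedge S/m,D)\cong\mathcal{C}(C,D)[m]$ (the $m$-torsion subgroup) for all $C,D\in\mathcal{C}$, so the $S/m$-stable objects are those $C$ such that $m=0$ in $\mathcal{C}(C,D)$ for all $D$, and the $S/m$-torsion objects are those $C$ with $\mathcal{C}(C,D)[m]=0$ for all $D$.
   Context: $m:S\to S$ is the $m$-fold sum of the identity. A closed idempotent is $E$ with $r:S\to E$ such that $r\wedge\mathrm{id}_E:E\to E\wedge E$ is an isomorphism; here $r:S\to S/m$ is the cofiber map. $X$ is $S/m$-stable if $r\wedge\mathrm{id}_X$ is an isomorphism and $S/m$-torsion if $S/m\wedge X\cong 0$. *)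

(* Defs.v *)
(* A category whose hom-sets carry commutative-monoid structure (the
   canonical enrichment of a semiadditive category), together with monoidal
   structure data (tensor, unit, associator, unitors with inverses). *)
Record SMCat := {
  Ob : Type;
  Hom : Ob -> Ob -> Type;
  idm : forall A : Ob, Hom A A;
  comp : forall A B C : Ob, Hom B C -> Hom A B -> Hom A C;
  hzero : forall A B : Ob, Hom A B;
  hadd : forall A B : Ob, Hom A B -> Hom A B -> Hom A B;
  tens : Ob -> Ob -> Ob;
  tensh : forall A B C D : Ob, Hom A B -> Hom C D -> Hom (tens A C) (tens B D);
  tunit : Ob;
  alpha : forall A B C : Ob, Hom (tens (tens A B) C) (tens A (tens B C));
  alpha_inv : forall A B C : Ob, Hom (tens A (tens B C)) (tens (tens A B) C);
  lam : forall A : Ob, Hom (tens tunit A) A;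
  lam_inv : forall A : Ob, Hom A (tens tunit A);
  rho : forall A : Ob, Hom (tens A tunit) A;
  rho_inv : forall A : Ob, Hom A (tens A tunit)
}.

Arguments Hom {s} _ _.
Arguments idm {s} _.
Arguments comp {s A B C} _ _.
Arguments hzero {s} A B.
Arguments hadd {s A B} _ _.
Arguments tens {s} _ _.
Arguments tensh {s A B C D} _ _.
Arguments tunit {s}.
Arguments alpha {s} A B C.
Arguments alpha_inv {s} A B C.
Arguments lam {s} A.
Arguments lam_inv {s} A.
Arguments rho {s} A.
Arguments rho_inv {s} A.

Section Defs.
Context {K : SMCat}.

Definition is_category : Prop :=
  (forall (A B C D : Ob K) (h : Hom C D) (g : Hom B C) (f : Hom A B),
      comp h (comp g f) = comp (comp h g) f) /\
  (forall (A B : Ob K) (f : Hom A B), comp (idm B) f = f) /\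
  (forall (A B : Ob K) (f : Hom A B), comp f (idm A) = f).

Definition is_cmon_enriched : Prop :=
  (forall (A B : Ob K) (f g h : Hom A B), hadd f (hadd g h) = hadd (hadd f g) h) /\
  (forall (A B : Ob K) (f g : Hom A B), hadd f g = hadd g f) /\
  (forall (A B : Ob K) (f : Hom A B), hadd (hzero A B) f = f) /\
  (forall (A B C : Ob K) (g g' : Hom B C) (f : Hom A B),
      comp (hadd g g') f = hadd (comp g f) (comp g' f)) /\
  (forall (A B C : Ob K) (g : Hom B C) (f f' : Hom A B),
      comp g (hadd f f') = hadd (comp g f) (comp g f')) /\
  (forall (A B C : Ob K) (f : Hom A B), comp (hzero B C) f = hzero A C) /\
  (forall (A B C : Ob K) (g : Hom B C), comp g (hzero A B) = hzero A C).

Definition is_zero_obj (O : Ob K) : Prop :=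
  forall Y : Ob K,
    (forall f g : Hom O Y, f = g) /\ (forall f g : Hom Y O, f = g).

Definition is_initial (O : Ob K) : Prop :=
  forall Y : Ob K, exists! f : Hom O Y, True.

Definition is_coproduct (A B P : Ob K) (i1 : Hom A P) (i2 : Hom B P) : Prop :=
  forall (Z : Ob K) (f : Hom A Z) (g : Hom B Z),
    exists! h : Hom P Z, comp h i1 = f /\ comp h i2 = g.

Definition is_semiadditive : Prop :=
  is_category /\ is_cmon_enriched /\
  (exists Z : Ob K, is_zero_obj Z) /\
  (forall A B : Ob K, exists (P : Ob K) (i1 : Hom A P) (i2 : Hom B P)
                             (p1 : Hom P A) (p2 : Hom P B),
      comp p1 i1 = idm A /\ comp p2 i2 = idm B /\
      comp p1 i2 = hzero B A /\ comp p2 i1 = hzero A B /\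
      hadd (comp i1 p1) (comp i2 p2) = idm P).

Definition is_iso {A B : Ob K} (f : Hom A B) : Prop :=
  exists g : Hom B A, comp g f = idm A /\ comp f g = idm B.

(* Monoidal (= E_1-monoidal) structure axioms. *)
Definition is_monoidal : Prop :=
  (forall A B : Ob K, tensh (idm A) (idm B) = idm (tens A B)) /\
  (forall (A B C A' B' C' : Ob K) (g : Hom B C) (f : Hom A B)
          (g' : Hom B' C') (f' : Hom A' B'),
      tensh (comp g f) (comp g' f') = comp (tensh g g') (tensh f f')) /\
  (forall (A A' B B' C C' : Ob K) (f : Hom A A') (g : Hom B B') (h : Hom C C'),
      comp (alpha A' B' C') (tensh (tensh f g) h)
      = comp (tensh f (tensh g h)) (alpha A B C)) /\
  (forall A B C : Ob K,
      comp (alpha_inv A B C) (alpha A B C) = idm _ /\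
      comp (alpha A B C) (alpha_inv A B C) = idm _) /\
  (forall (A B : Ob K) (f : Hom A B),
      comp (lam B) (tensh (idm tunit) f) = comp f (lam A)) /\
  (forall A : Ob K, comp (lam_inv A) (lam A) = idm _ /\ comp (lam A) (lam_inv A) = idm _) /\
  (forall (A B : Ob K) (f : Hom A B),
      comp (rho B) (tensh f (idm tunit)) = comp f (rho A)) /\
  (forall A : Ob K, comp (rho_inv A) (rho A) = idm _ /\ comp (rho A) (rho_inv A) = idm _) /\
  (forall A B C D : Ob K,
      comp (alpha A B (tens C D)) (alpha (tens A B) C D)
      = comp (tensh (idm A) (alpha B C D))
             (comp (alpha A (tens B C) D) (tensh (alpha A B C) (idm D)))) /\
  (forall A B : Ob K,
      comp (tensh (idm A) (lam B)) (alpha A tunit B) = tensh (rho A) (idm B)).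

Definition is_cofiber {A B : Ob K} (f : Hom A B) (E : Ob K) (q : Hom B E) : Prop :=
  comp q f = hzero A E /\
  forall (Z : Ob K) (g : Hom B Z),
    comp g f = hzero A Z -> exists! h : Hom E Z, comp h q = g.

Definition has_cofibers : Prop :=
  forall (A B : Ob K) (f : Hom A B), exists (E : Ob K) (q : Hom B E), is_cofiber f E q.

Definition tensor_distributes : Prop :=
  forall X : Ob K,
    (forall O : Ob K, is_initial O -> is_initial (tens X O) /\ is_initial (tens O X)) /\
    (forall (A B P : Ob K) (i1 : Hom A P) (i2 : Hom B P), is_coproduct A B P i1 i2 ->
       is_coproduct (tens X A) (tens X B) (tens X P) (tensh (idm X) i1) (tensh (idm X) i2) /\
       is_coproduct (tens A X) (tens B X) (tens P X) (tensh i1 (idm X)) (tensh i2 (idm X))) /\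
    (forall (A B E : Ob K) (f : Hom A B) (q : Hom B E), is_cofiber f E q ->
       is_cofiber (tensh (idm X) f) (tens X E) (tensh (idm X) q) /\
       is_cofiber (tensh f (idm X)) (tens E X) (tensh q (idm X))).

Fixpoint nmul {A B : Ob K} (f : Hom A B) (n : nat) : Hom A B :=
  match n with
  | O => hzero A B
  | S n' => hadd f (nmul f n')
  end.

Definition closed_idempotent (E : Ob K) (r : Hom tunit E) : Prop :=
  is_iso (tensh r (idm E)).

Definition is_stable (E : Ob K) (r : Hom tunit E) (X : Ob K) : Prop :=
  is_iso (tensh r (idm X)).

Definition is_torsion (E X : Ob K) : Prop := is_zero_obj (tens E X).

End Defs.

(* Main.v *)
Require Import Defs.

Lemma sa_facts {K : SMCat} (Hsa : is_semiadditive (K := K)) :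
  is_category (K:=K) /\ is_cmon_enriched (K:=K).
Proof. destruct Hsa as [a [b _]]. tauto. Qed.

Lemma add0r' {K : SMCat} (Hsa : is_semiadditive (K := K)) (A B : Ob K) (f : Hom A B) :
  hadd f (hzero A B) = f.
Proof.
  destruct (sa_facts Hsa) as [_ [_ [Hc [H0 _]]]]. rewrite Hc. apply H0.
Qed.

Lemma nmul_compl {K : SMCat} (Hsa : is_semiadditive (K := K)) (A B C : Ob K)
  (g : Hom B C) (f : Hom A B) n : nmul (comp g f) n = comp g (nmul f n).
Proof.
  destruct (sa_facts Hsa) as [_ [_ [_ [_ [_ [Hdr [_ H0r]]]]]]].
  induction n; simpl. now rewrite H0r. now rewrite Hdr, IHn.
Qed.

Lemma nmul_compr {K : SMCat} (Hsa : is_semiadditive (K := K)) (A B C : Ob K)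
  (g : Hom B C) (f : Hom A B) n : nmul (comp g f) n = comp (nmul g n) f.
Proof.
  destruct (sa_facts Hsa) as [_ [_ [_ [_ [Hdl [_ [H0l _]]]]]]].
  induction n; simpl. now rewrite H0l. now rewrite Hdl, IHn.
Qed.

Lemma nmul_idl {K : SMCat} (Hsa : is_semiadditive (K := K)) (A B : Ob K)
  (f : Hom A B) n : nmul f n = comp (nmul (idm B) n) f.
Proof.
  destruct (sa_facts Hsa) as [[_ [Hl _]] _].
  rewrite <- nmul_compr by exact Hsa. now rewrite Hl.
Qed.

Lemma nmul_idr {K : SMCat} (Hsa : is_semiadditive (K := K)) (A B : Ob K)
  (f : Hom A B) n : nmul f n = comp f (nmul (idm A) n).
Proof.
  destruct (sa_facts Hsa) as [[_ [_ Hr]] _].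
  rewrite <- nmul_compl by exact Hsa. now rewrite Hr.
Qed.

Lemma cof_cancel {K : SMCat} (Hsa : is_semiadditive (K := K)) (A B E Y : Ob K)
  (f : Hom A B) (q : Hom B E) (h h' : Hom E Y) :
  is_cofiber f E q -> comp h q = comp h' q -> h = h'.
Proof.
  destruct (sa_facts Hsa) as [[Ha _] [_ [_ [_ [_ [_ [_ H0r]]]]]]].
  intros [Hq Hu] Heq.
  assert (Hz : comp (comp h q) f = hzero A Y).
  { rewrite <- Ha, Hq. apply H0r. }
  destruct (Hu Y (comp h q) Hz) as [x [_ Hx]].
  transitivity x. symmetry; now apply Hx. now apply Hx.
Qed.

Lemma cof_zero_iso {K : SMCat} (Hsa : is_semiadditive (K := K)) (A B E : Ob K)
  (f : Hom A B) (q : Hom B E) :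
  is_cofiber f E q -> f = hzero A B -> is_iso q.
Proof.
  destruct (sa_facts Hsa) as [[Ha [Hl Hr]] [_ [_ [_ [_ [_ [_ H0r]]]]]]].
  intros Hc Hf. pose proof Hc as [Hq Hu].
  assert (Hz : comp (idm B) f = hzero A B) by (rewrite Hf; apply H0r).
  destruct (Hu B (idm B) Hz) as [h [Hh _]].
  exists h. split. exact Hh.
  apply (cof_cancel Hsa _ _ _ _ f q). exact Hc.
  rewrite <- Ha, Hh, Hl, Hr. reflexivity.
Qed.

Lemma functor_additive {K : SMCat} (Hsa : is_semiadditive (K := K))
  (Fo : Ob K -> Ob K) (F : forall A B : Ob K, Hom A B -> Hom (Fo A) (Fo B))
  (Fid : forall A, F A A (idm A) = idm (Fo A))
  (Fcomp : forall A B C (g : Hom B C) (f : Hom A B),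
      F A C (comp g f) = comp (F B C g) (F A B f))
  (Finit : forall O, is_initial O -> is_initial (Fo O))
  (Fcop : forall A B P i1 i2, is_coproduct A B P i1 i2 ->
      is_coproduct (Fo A) (Fo B) (Fo P) (F _ _ i1) (F _ _ i2)) :
  (forall A B, F A B (hzero A B) = hzero _ _) /\
  (forall A B (f g : Hom A B), F A B (hadd f g) = hadd (F _ _ f) (F _ _ g)).
Proof.
  pose proof Hsa as [[Ha [Hl Hr]] [[Haa [Hac [H0l' [Hdl [Hdr [H0l H0r]]]]]] [[Z HZ] Hbi]]].
  assert (F0 : forall A B, F A B (hzero A B) = hzero _ _).
  { intros A B.
    assert (E : hzero A B = comp (hzero Z B) (hzero A Z)) by (symmetry; apply H0l).
    rewrite E, Fcomp.
    assert (Zi : is_initial Z).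
    { intros Y. exists (hzero Z Y). split. exact I. intros; apply (proj1 (HZ Y)). }
    destruct (Finit Z Zi (Fo B)) as [u [_ Hu]].
    rewrite <- (Hu (F Z B (hzero Z B)) I), (Hu (hzero (Fo Z) (Fo B)) I).
    apply H0l. }
  split. exact F0.
  intros A B f g.
  destruct (Hbi A A) as [P [i1 [i2 [p1 [p2 [E11 [E22 [E12 [E21 Eid]]]]]]]]].
  assert (Cop : is_coproduct A A P i1 i2).
  { intros Y a b. exists (hadd (comp a p1) (comp b p2)). split.
    - split.
      + rewrite Hdl, <- !Ha, E11, E21, Hr, H0r. apply (add0r' Hsa).
      + rewrite Hdl, <- !Ha, E12, E22, Hr, H0r. apply H0l'.
    - intros h [Ha1 Ha2]. rewrite <- Ha1, <- Ha2, <- !Ha, <- Hdr, Eid. apply Hr. }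
  pose (k := hadd (comp f p1) (comp g p2)).
  pose (u := hadd i1 i2).
  assert (Hk1 : comp k i1 = f).
  { unfold k. rewrite Hdl, <- !Ha, E11, E21, Hr, H0r. apply (add0r' Hsa). }
  assert (Hk2 : comp k i2 = g).
  { unfold k. rewrite Hdl, <- !Ha, E12, E22, Hr, H0r. apply H0l'. }
  assert (Hfg : hadd f g = comp k u).
  { unfold u. rewrite Hdr, Hk1, Hk2. reflexivity. }
  pose proof (Fcop _ _ _ _ _ Cop) as FC.
  assert (Fid2 : hadd (comp (F _ _ i1) (F _ _ p1)) (comp (F _ _ i2) (F _ _ p2)) = idm (Fo P)).
  { destruct (FC (Fo P) (F _ _ i1) (F _ _ i2)) as [w [_ Hw]].
    transitivity w; [symmetry|]; apply Hw; split.
    - rewrite Hdl, <- !Ha, <- (Fcomp _ _ _ p1 i1), <- (Fcomp _ _ _ p2 i1), E11, E21, Fid, F0, Hr, H0r. apply (add0r' Hsa).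
    - rewrite Hdl, <- !Ha, <- (Fcomp _ _ _ p1 i2), <- (Fcomp _ _ _ p2 i2), E12, E22, Fid, F0, Hr, H0r. apply H0l'.
    - apply Hl.
    - apply Hl. }
  assert (Fu : F _ _ u = hadd (F _ _ i1) (F _ _ i2)).
  { rewrite <- (Hl _ _ (F _ _ u)), <- Fid2, Hdl, <- !Ha, <- (Fcomp _ _ _ p1 u), <- (Fcomp _ _ _ p2 u).
    unfold u. rewrite !Hdr, E11, E12, E21, E22, (add0r' Hsa), H0l', Fid, !Hr.
    reflexivity. }
  rewrite Hfg, Fcomp, Fu, Hdr, <- !Fcomp, Hk1, Hk2. reflexivity.
Qed.

Lemma nmul_functor {K : SMCat} (Fo : Ob K -> Ob K)
  (F : forall A B : Ob K, Hom A B -> Hom (Fo A) (Fo B))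
  (F0 : forall A B, F A B (hzero A B) = hzero _ _)
  (FD : forall A B (f g : Hom A B), F A B (hadd f g) = hadd (F _ _ f) (F _ _ g))
  A B (f : Hom A B) n : F A B (nmul f n) = nmul (F A B f) n.
Proof. induction n; simpl. apply F0. now rewrite FD, IHn. Qed.

Lemma tens_left_nmul {K : SMCat} (Hsa : is_semiadditive (K := K))
  (Hmon : is_monoidal (K := K)) (Hdist : tensor_distributes (K := K)) (X A : Ob K) n :
  tensh (idm X) (nmul (idm A) n) = nmul (idm (tens X A)) n.
Proof.
  pose proof Hsa as [[Ha [Hl Hr]] _].
  destruct Hmon as [Htid [Htcomp _]].
  destruct (Hdist X) as [Hi [Hc _]].
  destruct (functor_additive Hsa (tens X) (fun A B f => tensh (idm X) f)) as [F0 FD].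
  - intros; apply Htid.
  - intros. rewrite <- Htcomp, Hl. reflexivity.
  - intros O HO. apply (Hi O HO).
  - intros. apply (Hc _ _ _ _ _ H).
  - rewrite (nmul_functor (tens X) (fun A B f => tensh (idm X) f) F0 FD), Htid. reflexivity.
Qed.

Lemma tens_right_nmul {K : SMCat} (Hsa : is_semiadditive (K := K))
  (Hmon : is_monoidal (K := K)) (Hdist : tensor_distributes (K := K)) (X A : Ob K) n :
  tensh (nmul (idm A) n) (idm X) = nmul (idm (tens A X)) n.
Proof.
  pose proof Hsa as [[Ha [Hl Hr]] _].
  destruct Hmon as [Htid [Htcomp _]].
  destruct (Hdist X) as [Hi [Hc _]].
  destruct (functor_additive Hsa (fun A => tens A X) (fun A B f => tensh f (idm X))) as [F0 FD].
  - intros; apply Htid.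
  - intros. rewrite <- Htcomp, Hl. reflexivity.
  - intros O HO. apply (Hi O HO).
  - intros. apply (Hc _ _ _ _ _ H).
  - rewrite (nmul_functor (fun A => tens A X) (fun A B f => tensh f (idm X)) F0 FD), Htid.
    reflexivity.
Qed.

Theorem proposition5p15 (K : SMCat)
  (Hsa : is_semiadditive (K := K)) (Hmon : is_monoidal (K := K))
  (Hcof : has_cofibers (K := K)) (Hdist : tensor_distributes (K := K))
  (m : nat) (E : Ob K) (r : Hom tunit E)
  (Hr : is_cofiber (nmul (idm tunit) m) E r) :
  closed_idempotent E r /\
  (forall C D : Ob K,
     let Phi := fun f : Hom (tens C E) D =>
                  comp f (comp (tensh (idm C) r) (rho_inv C)) in
     (forall f : Hom (tens C E) D, nmul (Phi f) m = hzero C D) /\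
     (forall f g : Hom (tens C E) D, Phi f = Phi g -> f = g) /\
     (forall g : Hom C D, nmul g m = hzero C D ->
        exists f : Hom (tens C E) D, Phi f = g)) /\
  (forall X : Ob K,
     is_stable E r X <-> (forall (D : Ob K) (g : Hom X D), nmul g m = hzero X D)) /\
  (forall X : Ob K,
     is_torsion E X <->
     (forall (D : Ob K) (g : Hom X D), nmul g m = hzero X D -> g = hzero X D)).
Proof.
  pose proof Hsa as [[Ha [Hl Hrr]] [[Haa [Hac [H0l' [Hdl [Hdr [H0l H0r]]]]]] _]].
  pose proof Hmon as [_ [_ [_ [_ [_ [Hlaminv [_ [Hrhoinv _]]]]]]]].
  assert (CofR : forall X, is_cofiber (nmul (idm (tens tunit X)) m) (tens E X) (tensh r (idm X))).
  { intros X. rewrite <- (tens_right_nmul Hsa Hmon Hdist). apply (Hdist X). exact Hr. }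
  assert (CofL : forall X, is_cofiber (nmul (idm (tens X tunit)) m) (tens X E) (tensh (idm X) r)).
  { intros X. rewrite <- (tens_left_nmul Hsa Hmon Hdist). apply (Hdist X). exact Hr. }
  assert (K1 : nmul (idm E) m = hzero E E).
  { apply (cof_cancel Hsa _ _ _ _ _ _ _ _ Hr).
    rewrite <- nmul_idl by exact Hsa. rewrite H0l, nmul_idr by exact Hsa. apply Hr. }
  assert (LamL : forall X : Ob K, nmul (idm (tens tunit X)) m = hzero (tens tunit X) (tens tunit X) <-> nmul (idm X) m = hzero X X).
  { intros X. destruct (Hlaminv X) as [L1 L2]. split; intro H.
    - rewrite <- L2. rewrite (nmul_compl Hsa). rewrite (nmul_idl Hsa _ _ (lam_inv X)). rewrite H, H0l, H0r. reflexivity.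
    - rewrite <- L1. rewrite (nmul_compl Hsa). rewrite (nmul_idl Hsa _ _ (lam X)). rewrite H, H0l, H0r. reflexivity. }
  assert (GX : forall X, (forall (D : Ob K) (g : Hom X D), nmul g m = hzero X D) <->
                        nmul (idm X) m = hzero X X).
  { intros X; split; intro H. apply H. intros D g.
    rewrite nmul_idr, H by exact Hsa. apply H0r. }
  split; [|split; [|split]].
  - unfold closed_idempotent.
    apply (cof_zero_iso Hsa _ _ _ _ _ (CofR E)). apply LamL. exact K1.
  - intros C D Phi. destruct (Hrhoinv C) as [R1 R2].
    pose proof (CofL C) as Cf.
    split; [|split].
    + intros f. unfold Phi.
      rewrite nmul_compl, nmul_compr, nmul_idr by exact Hsa.
      rewrite (proj1 Cf), H0l, H0r. reflexivity.
    + intros f g H. unfold Phi in H.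
      apply (cof_cancel Hsa _ _ _ _ _ _ _ _ Cf).
      assert (H' : comp (comp f (tensh (idm C) r)) (rho_inv C)
                   = comp (comp g (tensh (idm C) r)) (rho_inv C)) by (rewrite <- !Ha; exact H).
      rewrite <- (Hrr _ _ (comp f (tensh (idm C) r))), <- (Hrr _ _ (comp g (tensh (idm C) r))), <- R1.
      rewrite Ha, Ha, H'. reflexivity.
    + intros g Hg.
      destruct ((proj2 Cf) D (comp g (rho C))) as [f [Hf _]].
      { rewrite <- (nmul_idr Hsa), (nmul_compr Hsa), Hg. apply H0l. }
      exists f. unfold Phi. rewrite Ha, Hf, <- Ha, R2. apply Hrr.
  - intros X. unfold is_stable. split; intro H.
    + apply (proj2 (GX X)). apply LamL. destruct H as [q' [Q1 Q2]].
      transitivity (comp q' (comp (tensh r (idm X)) (nmul (idm (tens tunit X)) m))).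
      { rewrite Ha, Q1, Hl. reflexivity. }
      rewrite (proj1 (CofR X)). apply H0r.
    + apply (cof_zero_iso Hsa _ _ _ _ _ (CofR X)). apply LamL. apply (proj1 (GX X)). exact H.
  - intros X. destruct (Hlaminv X) as [L1 L2]. unfold is_torsion. split; intro H.
    + intros D g Hg.
      destruct ((proj2 (CofR X)) D (comp g (lam X))) as [h [Hh _]].
      { rewrite <- (nmul_idr Hsa), (nmul_compr Hsa), Hg. apply H0l. }
      rewrite <- (Hrr _ _ g), <- L2, Ha, <- Hh.
      rewrite (proj1 (H D) h (hzero (tens E X) D)), H0l, H0l. reflexivity.
    + assert (Out : forall Y (h : Hom (tens E X) Y), h = hzero _ Y).
      { intros Y h.
        apply (cof_cancel Hsa _ _ _ _ _ _ _ _ (CofR X)). rewrite H0l.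
        assert (E1 : comp (comp h (tensh r (idm X))) (lam_inv X) = hzero X Y).
        { apply H.
          transitivity (comp h (comp (comp (tensh r (idm X)) (nmul (idm (tens tunit X)) m)) (lam_inv X))).
          { rewrite (nmul_compl Hsa), (nmul_idl Hsa _ _ (lam_inv X)), !Ha. reflexivity. }
          rewrite (proj1 (CofR X)), H0l, H0r. reflexivity. }
        rewrite <- (Hrr _ _ (comp h _)), <- L1, Ha, E1. apply H0l. }
      intros Y. split.
      * intros f g. rewrite (Out Y f), (Out Y g). reflexivity.
      * intros f g. rewrite <- (Hl _ _ f), <- (Hl _ _ g), (Out _ (idm _)), !H0l. reflexivity.
Qed.
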